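(* Let $(M,\rho)$ be a complete metric space, let $f:M\to\mathbb{R}\cup\{+\infty\}$ be proper, lower semicontinuous and bounded below, and let $g:M\to\mathbb{R}\cup\{+\infty\}$ be lower semicontinuous. Assume that for every $x\in\operatorname{dom}|\widetilde\nabla f|$ we have $x\in\operatorname{dom} g$ and $|\widetilde\nabla g|(x)\le|\widetilde\nabla f|(x)$. Then for every $\varepsilon>0$, every $x_0\in\operatorname{dom}|\widetilde\nabla f|$ and every $r\in(0,1)$ there exists $x\in\varepsilon\operatorname{Crit} f$ such that $$f(x)\le f(x_0)-\varepsilon\rho(x,x_0)\quad\text{and}\quad f(x_0)-rg(x_0)\ge f(x)-rg(x).$$ Moreover, for every $\varepsilon>0$ and $r\in(0,1)$, $$\inf_{x\in\operatorname{dom} f}(f(x)-rg(x))=\inf_{x\in\varepsilon\operatorname{Crit} f}(f(x)-rg(x)).$$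
   Context: $\operatorname{dom} f:=\{x:f(x)<+\infty\}$; on $\operatorname{dom} f$, $f(x)-rg(x)=-\infty$ if $g(x)=+\infty$. $[t]^+:=\max\{0,t\}$ (with $[f(x)-f(y)]^+:=0$ if $f(y)=+\infty$). For $x\in\operatorname{dom} f$, the global slope is $|\widetilde\nabla f|(x):=\sup_{y\neq x}\frac{[f(x)-f(y)]^+}{\rho(x,y)}\in[0,+\infty]$, and $\operatorname{dom}|\widetilde\nabla f|:=\{x\in\operatorname{dom} f:\ |\widetilde\nabla f|(x)<+\infty\}$. For $\varepsilon\ge0$, $\varepsilon\operatorname{Crit} f:=\{x\in\operatorname{dom} f:\ |\widetilde\nabla f|(x)\le\varepsilon\}$. *)

(* Defs.v *)
From HB Require Import structures.
From mathcomp Require Import all_boot all_order all_algebra.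
From mathcomp Require Import all_classical all_reals.
From mathcomp Require Import ereal.
Set Implicit Arguments. Unset Strict Implicit. Unset Printing Implicit Defensive.
Import Order.TTheory GRing.Theory Num.Theory.
Local Open Scope classical_set_scope.
Local Open Scope ring_scope.

Section Defs.
Variables (R : realType) (M : Type).

Definition is_metric (d : M -> M -> R) : Prop :=
  (forall x y, 0 <= d x y) /\
  (forall x y, d x y = 0 <-> x = y) /\
  (forall x y, d x y = d y x) /\
  (forall x y z, d x z <= d x y + d y z).

Definition metric_cauchy (d : M -> M -> R) (u : nat -> M) : Prop :=
  forall e : R, 0 < e -> exists N : nat, forall m n : nat,
    (N <= m)%N -> (N <= n)%N -> d (u m) (u n) < e.

Definition metric_converges (d : M -> M -> R) (u : nat -> M) (x : M) : Prop :=
  forall e : R, 0 < e -> exists N : nat, forall n : nat, (N <= n)%N -> d (u n) x < e.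

Definition metric_complete (d : M -> M -> R) : Prop :=
  forall u : nat -> M, metric_cauchy d u -> exists x, metric_converges d u x.

Definition metric_lsc (d : M -> M -> R) (f : M -> \bar R) : Prop :=
  forall x (t : R), (t%:E < f x)%E ->
    exists2 delta : R, 0 < delta & forall y, d x y < delta -> (t%:E < f y)%E.

(** f takes values in R ∪ {+oo}. *)
Definition no_minfty (f : M -> \bar R) : Prop := forall x, f x <> -oo%E.

Definition edom (f : M -> \bar R) : set M := [set x | (f x < +oo)%E].

Definition proper_fun (f : M -> \bar R) : Prop := exists x, (f x < +oo)%E.

Definition bounded_below (f : M -> \bar R) : Prop :=
  exists m : R, forall x, (m%:E <= f x)%E.

(** [f x - f y]^+, with the convention [f x - f y]^+ = 0 if f y = +oo. *)
Definition posdiff (f : M -> \bar R) (x y : M) : \bar R :=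
  match f x, f y with
  | EFin s, EFin t => (Num.max 0 (s - t))%:E
  | +oo%E, EFin _ => +oo%E
  | _, _ => 0%E
  end.

(** Global slope |~grad f|(x) = sup_{y <> x} [f x - f y]^+ / d x y, in [0,+oo].
    (0 is included in the supremum so that the value lies in [0,+oo] also
    when M = {x}; it does not change the value otherwise.) *)
Definition gslope (d : M -> M -> R) (f : M -> \bar R) (x : M) : \bar R :=
  ereal_sup ([set 0%E] `|`
    [set (posdiff f x y * ((d x y)^-1)%:E)%E | y in [set y | y <> x]]).

Definition dom_gslope (d : M -> M -> R) (f : M -> \bar R) : set M :=
  [set x | (f x < +oo)%E /\ (gslope d f x < +oo)%E].

Definition eCrit (d : M -> M -> R) (eps : R) (f : M -> \bar R) : set M :=
  [set x | (f x < +oo)%E /\ (gslope d f x <= eps%:E)%E].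

End Defs.

(* Main.v *)
Require Import Defs.
From HB Require Import structures.
From mathcomp Require Import all_boot all_order all_algebra.
From mathcomp Require Import all_classical all_reals.
From mathcomp Require Import ereal.
From mathcomp Require Import lra zify.
Import Order.TTheory GRing.Theory Num.Theory.
Local Open Scope classical_set_scope.
Local Open Scope ring_scope.

Lemma finE {R : realType} {M : Type} {f : M -> \bar R} {x : M} :
  no_minfty f -> (f x < +oo)%E -> f x = (fine (f x))%:E.
Proof. by move=> nf; case E: (f x) => [r||] //; move: (nf x); rewrite E. Qed.

Lemma small_inv {R : realType} (c : R) : 0 < c -> exists n : nat, (n.+1%:R)^-1 < c.
Proof.
move=> c0; exists (Num.bound (c^-1)).
have ci : 0 <= c^-1 by rewrite invr_ge0 ltW.
have h := archi_boundP ci.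
rewrite -[X in _ < X](invrK c) ltf_pV2 ?posrE ?invr_gt0 //.
by apply: (lt_trans h); rewrite ltr_nat.
Qed.

Lemma bern (R : realType) (q : R) (n : nat) : 1 <= q -> 1 + n%:R * (q - 1) <= q ^+ n.
Proof.
move=> q1; elim: n => [|n IH]; first by rewrite mul0r addr0 expr0.
rewrite exprS -natr1.
have h: 1 <= q ^+ n by rewrite exprn_ege1.
nra.
Qed.

Lemma ekeland (R : realType) (M : Type) (d : M -> M -> R) (f : M -> \bar R) (x0 : M) (lam : R) :
  is_metric d -> metric_complete d -> no_minfty f -> metric_lsc d f -> bounded_below f ->
  (f x0 < +oo)%E -> 0 < lam ->
  exists x, (f x < +oo)%E /\ fine (f x) + lam * d x0 x <= fine (f x0) /\
    forall y, y <> x -> ((fine (f x) - lam * d x y)%:E < f y)%E.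
Proof.
move=> [d0 [dE [dC dT]]] dcomp nf flsc [m fm] fx0 lam0.
have [phi phiE] : exists phi : M -> R, phi = fun y => fine (f y) by eexists.
pose D := fun y => (f y < +oo)%E.
pose S := fun x y => D y /\ phi y + lam * d x y <= phi x.
have fE : forall y, D y -> f y = (phi y)%:E by move=> y; rewrite phiE; exact: finE.
have mphi : forall y, D y -> m <= phi y.
  by move=> y Dy; have := fm y; rewrite (fE y Dy) lee_fin.
have dxx : forall x, d x x = 0 by move=> x; apply/dE.
have [ee eeE] : exists ee : nat -> R, ee = fun n => (n.+1%:R)^-1 by eexists.
have Srefl : forall x, D x -> S x x by move=> x Dx; split => //; rewrite dxx mulr0 addr0.
have Strans : forall x y z, S x y -> S y z -> S x z.
  move=> x y z [Dy Hy] [Dz Hz]; split => //.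
  have := ler_wpM2l (ltW lam0) (dT x y z); rewrite mulrDr; lra.
have step : forall (n : nat) x, exists y, D x ->
    S x y /\ forall z, S x z -> phi y <= phi z + ee n.
  move=> n x; have [Dx|nDx] := pselect (D x); last by exists x.
  have hinf : has_inf [set phi z | z in S x].
    split; first by exists (phi x), x => //; apply: Srefl.
    by exists m => _ [z [Dz _] <-]; exact: mphi.
  have ipos : 0 < ee n by rewrite eeE invr_gt0 ltr0n.
  have [e [z Sz <-] hz] := inf_adherent ipos hinf.
  exists z => _; split => // w Sw.
  have := @ge_inf _ _ hinf.2 (phi w) (ex_intro2 _ _ w Sw erefl); move=> hw; apply: (le_trans (ltW hz)); rewrite lerD2r; exact: hw.
have [nxt Hnxt] := choice (fun p : nat * M => step p.1 p.2).
pose u := fix u n := if n is k.+1 then nxt (k, u k) else x0.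
have Du : forall n, D (u n).
  by elim=> [|n IH] //=; have [[]] := Hnxt (n, u n) IH.
have Sstep n : S (u n) (u n.+1) := (Hnxt (n, u n) (Du n)).1.
have Smin n z : S (u n) z -> phi (u n.+1) <= phi z + ee n :=
  (Hnxt (n, u n) (Du n)).2 z.
have chain : forall n k, S (u n) (u (n + k)%N).
  move=> n; elim=> [|k IH]; first by rewrite addn0; apply: Srefl.
  by rewrite addnS; exact: Strans IH (Sstep _).
have small : forall n z, S (u n.+1) z -> lam * d (u n.+1) z <= ee n.
  move=> n z Sz; have Snz := Strans _ _ _ (Sstep n) Sz.
  have := Smin n z Snz; case: Sz => _; lra.
have chainle : forall n k, (n <= k)%N -> S (u n) (u k).
  by move=> n k /subnKC <-; exact: chain.
have cau : metric_cauchy d u.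
  move=> e e0.
  have hpos : 0 < lam * e / 2 by rewrite divr_gt0 ?mulr_gt0.
  have [N hN] := small_inv _ hpos.
  have {}hN : ee N < lam * e / 2 by rewrite eeE.
  exists N.+1 => p q hp hq.
  have h1 := small N (u p) (chainle _ _ hp).
  have h2 := small N (u q) (chainle _ _ hq).
  have := ler_wpM2l (ltW lam0) (dT (u p) (u N.+1) (u q)).
  rewrite [d (u p) (u N.+1)]dC mulrDr => h3.
  rewrite -(ltr_pM2l lam0); lra.
have [xs cvx] := dcomp u cau.
have xsS : forall n, S (u n) xs.
  move=> n; have [//|nS] := pselect (S (u n) xs).
  exfalso; pose c := phi (u n) - lam * d (u n) xs.
  have [t [ct tf]] : exists t, c < t /\ (t%:E < f xs)%E.
    have [Dx|nDx] := pselect (D xs).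
      have : ~ (phi xs + lam * d (u n) xs <= phi (u n)) by move=> h; apply: nS.
      move/negP; rewrite -ltNge => cp.
      exists ((c + phi xs) / 2); split; first by rewrite /c; lra.
      by rewrite fE // lte_fin /c; lra.
    exists (c + 1); split; first lra.
    case E: (f xs) => [r| |]; [by exfalso; apply: nDx; rewrite /D E ltry | exact: ltry |].
    by move: (nf xs); rewrite E.
  have [del del0 hdel] := flsc xs t tf.
  have [N1 hN1] := cvx del del0.
  have gap : 0 < lam^-1 * (t - c) by rewrite mulr_gt0 ?invr_gt0 // subr_gt0.
  have [N2 hN2] := cvx _ gap.
  pose k := maxn n (maxn N1 N2).
  have hk1 : (N1 <= k)%N by rewrite /k !leq_max leqnn !orbT.
  have hk2 : (N2 <= k)%N by rewrite /k !leq_max leqnn !orbT.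
  have hkn : (n <= k)%N by rewrite /k !leq_max leqnn.
  have tk0 : d xs (u k) < del by rewrite dC; exact: hN1.
  have := hdel (u k) tk0.
  rewrite fE // lte_fin => tk.
  have := hN2 k hk2; rewrite ltr_pdivlMl // => hk.
  have [_ hS] := chainle n k hkn.
  have := ler_wpM2l (ltW lam0) (dT (u n) (u k) xs); rewrite mulrDr.
  rewrite /c in ct hk; lra.
exists xs; split; first exact: (xsS 0%N).1.
split; first by have := (xsS 0%N).2; rewrite phiE.
have phx : fine (f xs) = phi xs by rewrite phiE.
move=> y yx; rewrite phx ltNge; apply/negP => hy.
have Dy : D y by rewrite /D; apply: le_lt_trans hy _; exact: ltry.
move: hy; rewrite (fE y Dy) lee_fin => hy.
have Sy : S xs y by split => //; lra.
have dpos : 0 < d xs y.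
  rewrite lt_neqAle d0 andbT; apply/eqP => /esym/dE h; exact: yx (esym h).
have hpos : 0 < lam * d xs y / 2 by rewrite divr_gt0 ?mulr_gt0.
have [n hn] := small_inv _ hpos.
have {}hn : ee n < lam * d xs y / 2 by rewrite eeE.
have h1 := small n y (Strans _ _ _ (xsS n.+1) Sy).
have h2 := small n xs (xsS n.+1).
have := ler_wpM2l (ltW lam0) (dT xs (u n.+1) y); rewrite mulrDr [d xs (u n.+1)]dC.
lra.
Qed.

Lemma gslope_ge0 (R : realType) (M : Type) (d : M -> M -> R) (h : M -> \bar R) x :
  (0 <= gslope d h x)%E.
Proof. by apply: ereal_sup_ubound; left. Qed.

Lemma gslope_pt (R : realType) (M : Type) (d : M -> M -> R) (h : M -> \bar R) x y :
  y <> x -> (posdiff h x y * ((d x y)^-1)%:E <= gslope d h x)%E.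
Proof. by move=> yx; apply: ereal_sup_ubound; right; exists y. Qed.

Lemma slope_le (R : realType) (M : Type) (d : M -> M -> R) (f : M -> \bar R) x lam :
  is_metric d -> no_minfty f -> (f x < +oo)%E -> 0 <= lam ->
  (forall y, y <> x -> ((fine (f x) - lam * d x y)%:E < f y)%E) ->
  (gslope d f x <= lam%:E)%E.
Proof.
move=> [d0 [dE _]] nf fx lam0 H.
apply: ge_ereal_sup => _ [->|[y yx <-]]; first by rewrite lee_fin.
have dp : 0 < d x y.
  by rewrite lt_neqAle d0 andbT; apply/eqP => /esym /dE /esym.
have := H y yx; rewrite /posdiff (finE nf fx).
case: (f y) (nf y) => [t| |] //= _.
  rewrite lte_fin => ht; rewrite -EFinM lee_fin ler_pdivrMr // ge_max.
  by apply/andP; split; [rewrite mulr_ge0 // ltW | lra].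
by rewrite mul0e lee_fin.
Qed.

Lemma pt_le (R : realType) (M : Type) (d : M -> M -> R) (g : M -> \bar R) x y (s : R) :
  is_metric d -> no_minfty g -> (g x < +oo)%E -> (g y < +oo)%E ->
  (gslope d g x <= s%:E)%E -> fine (g x) - fine (g y) <= s * d x y.
Proof.
move=> [d0 [dE [dC _]]] ng gx gy hs.
have [->|yx] := pselect (y = x).
  have -> : d x x = 0 by apply/dE.
  by rewrite subrr mulr0.
have dp : 0 < d x y.
  by rewrite lt_neqAle d0 andbT; apply/eqP => /esym /dE /esym.
have := le_trans (@gslope_pt _ _ d g x y yx) hs.
rewrite /posdiff (finE ng gx) (finE ng gy) /= -EFinM lee_fin ler_pdivrMr // ge_max.
by case/andP.
Qed.

Lemma part1 (R : realType) (M : Type) (d : M -> M -> R) (f g : M -> \bar R) :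
  is_metric d -> metric_complete d ->
  no_minfty f -> metric_lsc d f -> bounded_below f ->
  no_minfty g ->
  (forall x, dom_gslope d f x ->
     (g x < +oo)%E /\ (gslope d g x <= gslope d f x)%E) ->
  forall (eps : R), 0 < eps -> forall x0, dom_gslope d f x0 ->
     forall r : R, 0 < r < 1 ->
     exists x, eCrit d eps f x /\
       (f x <= f x0 - (eps * d x x0)%:E)%E /\
       (f x - r%:E * g x <= f x0 - r%:E * g x0)%E.
Proof.
move=> dm dcomp nf flsc fbb ng hgf eps eps0 x0 hx0 r /andP[r0 r1].
have dm' := dm; case: dm' => [d0 [dE [dC dT]]].
have dxx : forall x, d x x = 0 by move=> x; apply/dE.
pose q := r^-1.
have q1 : 1 < q by rewrite /q invf_gt1.
have rq : r * q = 1 by rewrite /q divff // gt_eqF.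
have gsE : forall x, dom_gslope d f x -> gslope d f x = (fine (gslope d f x))%:E.
  move=> x [_ hx]; have := @gslope_ge0 _ _ d f x.
  by case: (gslope d f x) hx.
have key : forall N : nat, forall x0, dom_gslope d f x0 ->
    fine (gslope d f x0) <= eps * q ^+ N ->
     exists x, eCrit d eps f x /\
       (f x <= f x0 - (eps * d x x0)%:E)%E /\
       (f x - r%:E * g x <= f x0 - r%:E * g x0)%E.
  elim=> [|N IH] {}x0 {}hx0 hs.
    exists x0; split; first by split; [case: hx0 | rewrite gsE // lee_fin -(mulr1 eps)].
    by rewrite dxx mulr0 sube0.
  pose s0 := fine (gslope d f x0).
  pose lam := Num.max eps (r * s0).
  have lam0 : 0 < lam by rewrite /lam lt_max eps0.
  have [x1 [fx1 [h1 h2]]] := @ekeland _ _ d f x0 lam dm dcomp nf flsc fbb hx0.1 lam0.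
  have sl1 : (gslope d f x1 <= lam%:E)%E by apply: slope_le => //; exact: ltW.
  have qN : 1 <= q ^+ N by rewrite exprn_ege1 // ltW.
  have lamle : lam <= eps * q ^+ N.
    rewrite /lam ge_max; apply/andP; split.
      by rewrite -[X in X <= _]mulr1 ler_wpM2l // ltW.
    have := ler_wpM2l (ltW r0) hs; rewrite exprS => h; apply: le_trans h _.
    by rewrite mulrCA [r * (q * _)]mulrA rq mul1r.
  have hx1 : dom_gslope d f x1 by split => //; apply: le_lt_trans sl1 _; exact: ltry.
  have hs1 : fine (gslope d f x1) <= eps * q ^+ N.
    by rewrite -lee_fin -gsE //; apply: le_trans sl1 _; rewrite lee_fin.
  have [x [cx [hfx hgx]]] := IH x1 hx1 hs1.
  exists x; split => //; split.
    have fx : (f x < +oo)%E by case: cx.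
    move: hfx; rewrite (finE nf fx) (finE nf fx1) (finE nf hx0.1) -!EFinB !lee_fin => hfx.
    have := ler_wpM2l (ltW eps0) (dT x x1 x0).
    have : eps * d x0 x1 <= lam * d x0 x1 by rewrite ler_wpM2r // le_max lexx.
    rewrite (dC x1 x0); lra.
  have fx : (f x < +oo)%E by case: cx.
  have dx : dom_gslope d f x.
    split => //; case: cx => _ /le_lt_trans; apply; exact: ltry.
  have [g0 gs0] := hgf x0 hx0.
  have [g1 _] := hgf x1 hx1.
  have [g2 _] := hgf x dx.
  move: hgx.
  rewrite (finE nf fx) (finE nf fx1) (finE nf hx0.1) (finE ng g0) (finE ng g1) (finE ng g2).
  rewrite -!EFinM -!EFinB !lee_fin => hgx.
  have hg : fine (g x0) - fine (g x1) <= s0 * d x0 x1.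
    by apply: (@pt_le _ _ d g) => //; rewrite /s0 -gsE.
  have := ler_wpM2l (ltW r0) hg.
  have : (r * s0) * d x0 x1 <= lam * d x0 x1 by rewrite ler_wpM2r // le_max lexx orbT.
  rewrite !mulrA mulrBr.
  lra.
have s0E := gsE x0 hx0.
pose s0 := fine (gslope d f x0).
have s00 : 0 <= s0 by rewrite -lee_fin /s0 -s0E gslope_ge0.
pose K := s0 / (eps * (q - 1)).
have epq : 0 < eps * (q - 1) by rewrite mulr_gt0 // subr_gt0.
have K0 : 0 <= K by rewrite /K divr_ge0 // ltW.
have hN := archi_boundP K0.
apply: (key (Num.bound K)) => //.
have := @bern _ q (Num.bound K) (ltW q1).
have : K * (eps * (q - 1)) <= (Num.bound K)%:R * (eps * (q - 1)).
  by rewrite ler_wpM2r // ltW.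
rewrite /K divfK ?gt_eqF // => h1 h2.
have := ler_wpM2l (ltW eps0) h2.
rewrite mulrDr mulr1 -/s0.
lra.
Qed.

Lemma le_by_gt (R : realType) (a b : \bar R) :
  (forall t : R, (a < t%:E)%E -> (b <= t%:E)%E) -> (b <= a)%E.
Proof.
case: a => [a0| |] H.
- case: b H => [b0| |] H; last by rewrite leNye.
  + rewrite lee_fin leNgt; apply/negP => hab.
    have ht : (a0%:E < ((a0 + b0) / 2)%:E)%E by rewrite lte_fin; lra.
    by have := H _ ht; rewrite lee_fin; lra.
  + have ht : (a0%:E < (a0 + 1)%:E)%E by rewrite lte_fin; lra.
    by have := H _ ht.
- exact: leey.
- case: b H => [b0| |] H //.
  + by have := H (b0 - 1) (ltNyr _); rewrite lee_fin => h; exfalso; lra.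
  + by have := H 0 (ltNyr _).
Qed.

Theorem theorem3p8 (R : realType) (M : Type) (d : M -> M -> R)
  (f g : M -> \bar R) :
  is_metric d -> metric_complete d ->
  no_minfty f -> proper_fun f -> metric_lsc d f -> bounded_below f ->
  no_minfty g -> metric_lsc d g ->
  (forall x, dom_gslope d f x ->
     (g x < +oo)%E /\ (gslope d g x <= gslope d f x)%E) ->
  (forall (eps : R), 0 < eps -> forall x0, dom_gslope d f x0 ->
     forall r : R, 0 < r < 1 ->
     exists x, eCrit d eps f x /\
       (f x <= f x0 - (eps * d x x0)%:E)%E /\
       (f x - r%:E * g x <= f x0 - r%:E * g x0)%E) /\
  (forall (eps r : R), 0 < eps -> 0 < r < 1 ->
     ereal_inf [set (f x - r%:E * g x)%E | x in edom f] =
     ereal_inf [set (f x - r%:E * g x)%E | x in eCrit d eps f]).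
Proof.
move=> dm dcomp nf _ flsc fbb ng glsc hgf.
have P1 := @part1 _ _ d f g dm dcomp nf flsc fbb ng hgf.
split=> // eps r eps0 hr.
have /andP[r0 r1] := hr.
apply/eqP; rewrite eq_le; apply/andP; split.
  by apply: ereal_inf_le_tmp => _ [x [hx _] <-]; exists x.
apply: le_ereal_inf_tmp => _ [x hx <-].
apply: le_by_gt => t ht.
have [m fm] := fbb.
pose phx := fine (f x).
have fxE : f x = phx%:E := finE nf hx.
pose c := r^-1 * (phx - t).
have rc : r * c = phx - t by rewrite /c mulrA divff ?mul1r // gt_eqF.
have cg : (c%:E < g x)%E.
  move: ht; rewrite fxE; case: (g x) (ng x) => [gx| |] //= _; last by rewrite ltry.
  rewrite -EFinD !lte_fin => h.
  by rewrite -(ltr_pM2l r0) rc; lra.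
have [del del0 hdel] := glsc x c cg.
have mx : m <= phx by have := fm x; rewrite fxE lee_fin.
pose lam := (phx - m + 1) / del.
have lam0 : 0 < lam by rewrite /lam divr_gt0 //; lra.
have [y [fy [h1 h2]]] := @ekeland _ _ d f x lam dm dcomp nf flsc fbb hx lam0.
have sly : (gslope d f y <= lam%:E)%E by apply: slope_le => //; exact: ltW.
have hy : dom_gslope d f y by split => //; apply: le_lt_trans sly _; exact: ltry.
have my : m <= fine (f y) by have := fm y; rewrite (finE nf fy) lee_fin.
have dxy : d x y < del.
  rewrite -(ltr_pM2l lam0).
  have -> : lam * del = phx - m + 1 by rewrite /lam divfK ?gt_eqF.
  rewrite -/phx in h1; lra.
have cgy := hdel y dxy.
have [gy _] := hgf y hy.
have [z [cz [_ hz]]] := P1 eps eps0 y hy r hr.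
apply: (@le_trans _ _ (f z - r%:E * g z)%E).
  by apply: ereal_inf_lbound; exists z.
apply: le_trans hz _.
move: cgy; rewrite (finE nf fy) (finE ng gy) -EFinM -EFinB !lte_fin lee_fin => cgy.
have hh : r * c < r * fine (g y) by rewrite ltr_pM2l.
rewrite rc in hh.
rewrite -/phx in h1.
have dxy0 : 0 <= d x y by case: dm => H _; apply: H.
have : 0 <= lam * d x y by rewrite mulr_ge0 // ltW.
lra.
Qed.
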